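(* Let $\mu\in(0,1/2)$. For every $c<c_J$ the rotation number of the exterior collision orbit in the Moon component is greater than that in the Earth component: $R^E_{\text{ext}}(c)<R^M_{\text{ext}}(c)$.
   Context: $c_J=-1-2\sqrt{\mu(1-\mu)}$. $K(k)=\int_0^{\pi/2}(1-k^2\sin^2\theta)^{-1/2}d\theta$ is the complete elliptic integral of the first kind. $R^E_{\text{ext}}(c)=\frac{\pi}{2}\frac{1}{\sqrt{1-2k_E^2}K(k_E)}$ with $k_E^2=\frac12\big(1-\frac{1-2\mu-c}{\sqrt{c^2-2(1-2\mu)c+1}}\big)$, and $R^M_{\text{ext}}(c)=\frac{\pi}{2}\frac{1}{\sqrt{1-2k_M^2}K(k_M)}$ with $k_M^2=\frac12\big(1+\frac{c+1-2\mu}{\sqrt{c^2+2(1-2\mu)c+1}}\big)$; these are the ratios of $\eta$- to $\xi$-oscillation periods of the exterior collision orbits of the Euler problem (mass ratio $\mu$) near the Earth and near the Moon, respectively. *)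

(* Defs.v *)
From Stdlib Require Import Reals Lra ClassicalEpsilon.
Open Scope R_scope.

Definition is_RInt (f : R -> R) (a b v : R) : Prop :=
  exists pr : Riemann_integrable f a b, RiemannInt pr = v.

(* Complete elliptic integral of the first kind:
   K(k) = int_0^{pi/2} (1 - k^2 sin^2 theta)^(-1/2) dtheta.
   Chosen (by classical choice) as the Riemann integral when it exists. *)
Definition ellipK (k : R) : R :=
  epsilon (inhabits 0)
    (fun v => is_RInt (fun t => / sqrt (1 - k ^ 2 * (sin t) ^ 2)) 0 (PI / 2) v).

Definition cJ (mu : R) : R := -1 - 2 * sqrt (mu * (1 - mu)).

Definition kE2 (mu c : R) : R :=
  / 2 * (1 - (1 - 2 * mu - c) / sqrt (c ^ 2 - 2 * (1 - 2 * mu) * c + 1)).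

Definition kM2 (mu c : R) : R :=
  / 2 * (1 + (c + 1 - 2 * mu) / sqrt (c ^ 2 + 2 * (1 - 2 * mu) * c + 1)).

Definition RextE (mu c : R) : R :=
  (PI / 2) / (sqrt (1 - 2 * kE2 mu c) * ellipK (sqrt (kE2 mu c))).

Definition RextM (mu c : R) : R :=
  (PI / 2) / (sqrt (1 - 2 * kM2 mu c) * ellipK (sqrt (kM2 mu c))).

(* Main.v *)
Require Import Defs.
From Stdlib Require Import Reals Lra Psatz ClassicalEpsilon.
From Coquelicot Require Import Coquelicot.
Open Scope R_scope.

Definition fk (m t : R) : R := / sqrt (1 - m * sin t ^ 2).

Lemma sin2_le1 t : 0 <= sin t ^ 2 <= 1.
Proof. pose proof (SIN_bound t). nra. Qed.

Lemma fk_cont m t : 0 <= m < 1 -> continuous (fk m) t.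
Proof.
  intros Hm. apply (ex_derive_continuous (K:=R_AbsRing) (V:=R_NormedModule)). unfold fk.
  pose proof (sin2_le1 t).
  assert (0 < 1 - m * sin t ^ 2) by nra.
  auto_derive. split; [lra|]. split; [|exact I].
  apply Rgt_not_eq, sqrt_lt_R0; lra.
Qed.

Lemma fk_ex m : 0 <= m < 1 -> ex_RInt (fk m) 0 (PI/2).
Proof. intros Hm. apply (ex_RInt_continuous (V:=R_CompleteNormedModule)). intros; apply fk_cont; auto. Qed.

Lemma ellipK_eq m : 0 <= m < 1 -> ellipK (sqrt m) = RInt (fk m) 0 (PI/2).
Proof.
  intros Hm. unfold ellipK.
  rewrite pow2_sqrt by lra.
  match goal with |- epsilon _ ?Q = _ => set (P := Q) end.
  assert (HP : exists v, P v).
  { exists (RInt (fk m) 0 (PI/2)). unfold P, Defs.is_RInt.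
    pose proof (ex_RInt_Reals_0 _ _ _ (fk_ex m Hm)) as pr.
    exists pr. symmetry. apply RInt_Reals. }
  destruct (epsilon_spec (inhabits 0) P HP) as [pr Hpr].
  rewrite <- Hpr. symmetry. apply (RInt_Reals (fk m)).
Qed.

Lemma key mE mM : 0 <= mE -> mE < mM -> mM < /2 ->
  0 < sqrt (1 - 2 * mM) * ellipK (sqrt mM) <
  sqrt (1 - 2 * mE) * ellipK (sqrt mE).
Proof.
  intros H0 H1 H2.
  rewrite !ellipK_eq by lra.
  assert (HPI : 0 < PI/2) by (pose proof PI_RGT_0; lra).
  rewrite <- !(RInt_scal (V:=R_CompleteNormedModule)) by (apply fk_ex; lra).
  split.
  - assert (Z : RInt (V:=R_CompleteNormedModule) (fun _ => 0) 0 (PI/2) = 0).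
    { rewrite RInt_const. apply Rmult_0_r. }
    rewrite <- Z at 1.
    apply RInt_lt; auto.
    + intros x _. apply (continuous_scal_r (K:=R_AbsRing) (V:=R_NormedModule)). apply fk_cont; lra.
    + intros x _. apply continuous_const.
    + intros x _. change (0 < sqrt (1 - 2*mM) * fk mM x). unfold fk.
      pose proof (sin2_le1 x).
      apply Rmult_lt_0_compat; [apply sqrt_lt_R0; lra|].
      apply Rinv_0_lt_compat, sqrt_lt_R0; nra.
  - apply RInt_lt; auto.
    + intros x _. apply (continuous_scal_r (K:=R_AbsRing) (V:=R_NormedModule)). apply fk_cont; lra.
    + intros x _. apply (continuous_scal_r (K:=R_AbsRing) (V:=R_NormedModule)). apply fk_cont; lra.
    + intros x _. change (sqrt (1 - 2*mM) * fk mM x < sqrt (1 - 2*mE) * fk mE x).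
      unfold fk. pose proof (sin2_le1 x). set (s := sin x ^ 2) in *.
      assert (AM : 0 < 1 - mM * s) by nra.
      assert (AE : 0 < 1 - mE * s) by nra.
      rewrite <- !(sqrt_inv), <- !sqrt_mult by (try lra; left; apply Rinv_0_lt_compat; lra).
      apply sqrt_lt_1; try (apply Rmult_le_pos; [lra| left; apply Rinv_0_lt_compat; lra]).
      apply (Rmult_lt_reg_r ((1 - mM*s)*(1-mE*s))); [nra|].
      replace ((1 - 2 * mM) * / (1 - mM * s) * ((1 - mM * s) * (1 - mE * s)))
        with ((1 - 2 * mM) * (1 - mE * s)) by (field; lra).
      replace ((1 - 2 * mE) * / (1 - mE * s) * ((1 - mM * s) * (1 - mE * s)))
        with ((1 - 2 * mE) * (1 - mM * s)) by (field; lra).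
      nra.
Qed.

Theorem mainTheorem8 (mu c : R) (Hmu0 : 0 < mu) (Hmu1 : mu < / 2)
  (Hc : c < cJ mu) : RextE mu c < RextM mu c.
Proof.
  assert (Hc1 : c < -1).
  { unfold cJ in Hc. pose proof (sqrt_pos (mu * (1 - mu))). lra. }
  set (a := 1 - 2*mu).
  assert (Ha : 0 < a < 1) by (unfold a; lra).
  assert (QE : 0 < c ^ 2 - 2 * a * c + 1) by nra.
  assert (QM : 0 < c ^ 2 + 2 * a * c + 1) by nra.
  set (SE := sqrt (c ^ 2 - 2 * a * c + 1)).
  set (SM := sqrt (c ^ 2 + 2 * a * c + 1)).
  assert (SEp : 0 < SE) by (apply sqrt_lt_R0; lra).
  assert (SMp : 0 < SM) by (apply sqrt_lt_R0; lra).
  assert (SE2 : SE * SE = c ^ 2 - 2 * a * c + 1) by (apply sqrt_sqrt; lra).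
  assert (SM2 : SM * SM = c ^ 2 + 2 * a * c + 1) by (apply sqrt_sqrt; lra).
  assert (E1 : a - c < SE) by nra.
  assert (M1 : - (c + a) < SM) by nra.
  assert (X : - (c + a) * SE < (a - c) * SM).
  { assert (0 < - (c+a) * SE) by nra.
    assert ((- (c + a) * SE) * (- (c + a) * SE) < ((a - c) * SM) * ((a - c) * SM)).
    { replace ((- (c + a) * SE) * (- (c + a) * SE)) with ((c+a)^2 * (SE*SE)) by ring.
      replace ((a - c) * SM * ((a - c) * SM)) with ((a-c)^2 * (SM*SM)) by ring.
      rewrite SE2, SM2.
      assert (0 < (-c) * a * (1 - a * a)) by (apply Rmult_lt_0_compat; nra).
      nra. }
    assert (0 < (a - c) * SM) by nra.
    destruct (Rlt_or_le (- (c + a) * SE) ((a - c) * SM)); auto. nra. }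
  unfold RextE, RextM, kE2, kM2. fold a. fold SE SM.
  set (mE := / 2 * (1 - (a - c) / SE)).
  set (mM := / 2 * (1 + (c + 1 - 2 * mu) / SM)).
  assert (HmM : mM = / 2 * (1 + (c + a) / SM)) by (unfold mM, a; f_equal; f_equal; f_equal; ring).
  assert (q1 : (a - c) / SE < 1) by (apply Rmult_lt_reg_r with SE; auto; field_simplify; lra).
  assert (q2 : - 1 < (c + a) / SM) by (apply Rmult_lt_reg_r with SM; auto; field_simplify; lra).
  assert (q3 : (c + a) / SM < 0) by (apply Rmult_lt_reg_r with SM; auto; field_simplify; lra).
  assert (q4 : - ((a - c) / SE) < (c + a) / SM).
  { apply Rmult_lt_reg_r with (SE * SM); [nra|].
    replace (- ((a - c) / SE) * (SE * SM)) with (- ((a - c) * SM)) by (field; lra).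
    replace ((c + a) / SM * (SE * SM)) with ((c + a) * SE) by (field; lra). lra. }
  destruct (key mE mM) as [K1 K2].
  - unfold mE; lra.
  - unfold mE; rewrite HmM; lra.
  - rewrite HmM; lra.
  - unfold Rdiv. apply Rmult_lt_compat_l; [pose proof PI_RGT_0; lra|].
    apply Rinv_lt_contravar; [nra|exact K2].
Qed.
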